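(* Let $p\in(0,1)$, $\gamma>0$, $B>0$, $w,N\in\mathbb{N}$, let $(\xi_j^{(N)*})_{j=1}^N$ be the unique maximizer of $\mathcal{T}_N$, and let $B^{(N)}=B-\sum_{i=1}^N\xi_i^{(N)*}$. Then $$\xi_N^{(N)*}=\frac{B^{(N)}}{w},$$ and for every $j\in\{1,\dots,N-1\}$, $$\frac{1-p}{1+\gamma\xi_{j+1}^{(N)*}}=\frac{1}{1+\gamma\xi_j^{(N)*}}-\frac{p}{1+\frac{\gamma}{w}\left(B-\sum_{i=1}^{j}\xi_i^{(N)*}\right)}.$$
   Context: Logarithms are base 2. For an admissible (nonnegative, with sum at most $B$) sequence $(x_j)_{j\ge1}$, $$\mathcal{T}_\infty(x_1,x_2,\dots)=\sum_{k=1}^{w}p^2(1-p)^{k-1}\frac{k}{2}\log_2\!\Big(1+\gamma\frac{B}{k}\Big)+\sum_{j=1}^{\infty}p(1-p)^{j+w-1}\frac12\log_2(1+\gamma x_j)+\sum_{k=1}^{\infty}p^2(1-p)^{k+w-1}\frac{w}{2}\log_2\!\Big(1+\gamma\frac{B-\sum_{j=1}^{k}x_j}{w}\Big).$$ For $N\in\mathbb{N}$ and $\xi_1,\dots,\xi_N\ge0$ with $\sum_{j=1}^N\xi_j\le B$, define $\mathcal{T}_N(\xi_1,\dots,\xi_N)=\mathcal{T}_\infty(\xi_1,\dots,\xi_N,0,0,\dots)$. $\mathcal{T}_N$ has a unique maximizer over this compact set, denoted $(\xi_j^{(N)*})_{j=1}^N$. *)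

(* Defs.v *)
From Stdlib Require Import Reals Lra.
From Coquelicot Require Import Coquelicot.
Open Scope R_scope.

Definition log2 (x : R) : R := ln x / ln 2.

Fixpoint sum1 (f : nat -> R) (n : nat) : R :=
  match n with
  | O => 0
  | S m => sum1 f m + f (S m)
  end.

(* Sequences are indexed from 1: x : nat -> R, the value x 0 is ignored. *)
Definition Tinf (p gamma B : R) (w : nat) (x : nat -> R) : R :=
  sum1 (fun k => p ^ 2 * (1 - p) ^ (k - 1) * (INR k / 2)
                 * log2 (1 + gamma * (B / INR k))) w
  + Series (fun n => (* j = n + 1 *)
      p * (1 - p) ^ (n + w) * (1 / 2) * log2 (1 + gamma * x (S n)))
  + Series (fun n => (* k = n + 1 *)
      p ^ 2 * (1 - p) ^ (n + w) * (INR w / 2)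
      * log2 (1 + gamma * ((B - sum1 x (S n)) / INR w))).

Definition padN (N : nat) (xi : nat -> R) : nat -> R :=
  fun j => if (j <=? N)%nat then xi j else 0.

Definition TN (p gamma B : R) (w N : nat) (xi : nat -> R) : R :=
  Tinf p gamma B w (padN N xi).

Definition feasibleN (B : R) (N : nat) (xi : nat -> R) : Prop :=
  (forall j : nat, (1 <= j <= N)%nat -> 0 <= xi j) /\ sum1 xi N <= B.

Definition is_maximizerN (p gamma B : R) (w N : nat) (xi : nat -> R) : Prop :=
  feasibleN B N xi /\
  forall eta : nat -> R, feasibleN B N eta ->
    TN p gamma B w N eta <= TN p gamma B w N xi.

(* Main.v *)
Require Import Defs.
From Stdlib Require Import Reals Lra Lia.
From Coquelicot Require Import Coquelicot.
Open Scope R_scope.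

Lemma sum1_ext f g n : (forall i, (1 <= i <= n)%nat -> f i = g i) -> sum1 f n = sum1 g n.
Proof.
  induction n; intros H; simpl; auto.
  rewrite IHn; [rewrite H; [reflexivity|lia]|]. intros i Hi; apply H; lia.
Qed.

Lemma sum1_shift f m : sum1 f (S m) = f 1%nat + sum1 (fun j => f (S j)) m.
Proof. induction m; simpl in *. ring. rewrite IHm. ring. Qed.

Lemma series_tail : forall M (u : nat -> R) C q, 0 <= q < 1 ->
  (forall n, (M <= n)%nat -> u n = C * q ^ n) ->
  is_series u (sum1 (fun j => u (j-1)%nat) M + C * q ^ M / (1 - q)).
Proof.
  induction M; intros u C q Hq Hu.
  - simpl. assert (H := is_series_scal_l C _ _ (is_series_geom q ltac:(rewrite Rabs_right; lra))).
    eapply is_series_ext in H. 2:{ intros n. symmetry. rewrite Hu by lia. reflexivity. }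
    replace (0 + C * 1 / (1 - q)) with (scal C (/ (1 - q))). exact H.
    unfold scal; simpl; unfold mult; simpl. field. lra.
  - apply is_series_decr_1.
    assert (H := IHM (fun k => u (S k)) (C * q) q Hq).
    assert (H' : is_series (fun k => u (S k))
        (sum1 (fun j => u (S (j - 1))) M + C * q * q ^ M / (1 - q))).
    { apply H. intros n Hn. rewrite Hu by lia. simpl. ring. }
    match goal with |- is_series _ ?l => replace l with (sum1 (fun j => u (S (j - 1))) M + C * q * q ^ M / (1 - q)) end. exact H'.
    rewrite sum1_shift. unfold plus, opp; simpl. 
    rewrite (sum1_ext (fun j => u (S (j - 1))) (fun j => u (j - 0)%nat)).
    2:{ intros i Hi. f_equal. lia. }
    unfold plus, opp; simpl. field. lra.
Qed.

Lemma sum1_pad N eta k : sum1 (padN N eta) k = sum1 eta (Nat.min k N).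
Proof.
  induction k. simpl. reflexivity.
  change (sum1 (padN N eta) (S k)) with (sum1 (padN N eta) k + padN N eta (S k)).
  rewrite IHk. unfold padN. destruct (Nat.leb_spec (S k) N).
  - rewrite (Nat.min_l k) by lia. rewrite (Nat.min_l (S k)) by lia. reflexivity.
  - rewrite (Nat.min_r k) by lia. rewrite (Nat.min_r (S k)) by lia. ring.
Qed.

Definition Tc (p gamma B : R) (w N : nat) (eta : nat -> R) : R :=
  sum1 (fun k => p ^ 2 * (1 - p) ^ (k - 1) * (INR k / 2)
                 * log2 (1 + gamma * (B / INR k))) w
  + sum1 (fun j => p * (1 - p) ^ (j - 1 + w) * (1 / 2) * log2 (1 + gamma * eta j)) N
  + sum1 (fun j => p ^ 2 * (1 - p) ^ (j - 1 + w) * (INR w / 2)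
      * log2 (1 + gamma * ((B - sum1 eta j) / INR w))) (N - 1)
  + p ^ 2 * (1 - p) ^ w * (INR w / 2) * log2 (1 + gamma * ((B - sum1 eta N) / INR w))
    * (1 - p) ^ (N - 1) / (1 - (1 - p)).

Lemma TN_Tc p gamma B w N eta : 0 < p < 1 -> (1 <= N)%nat ->
  TN p gamma B w N eta = Tc p gamma B w N eta.
Proof.
  intros Hp HN. unfold TN, Tinf, Tc.
  match goal with |- context [Series ?u] =>
    assert (Hs1 : forall n, (N <= n)%nat -> u n = 0 * (1 - p) ^ n) end.
  { intros n Hn. simpl. unfold padN. replace (S n <=? N)%nat with false.
      2:{ symmetry; apply Nat.leb_gt; lia. }
      rewrite Rmult_0_r, Rplus_0_r. unfold log2. rewrite ln_1. unfold Rdiv. ring. }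
  rewrite (is_series_unique _ _ (series_tail N _ 0 (1 - p) ltac:(lra) Hs1)).
  match goal with |- context [Series ?u] =>
    assert (Hs2 : forall n, (N - 1 <= n)%nat -> u n = (p ^ 2 * (1 - p) ^ w * (INR w / 2) * log2 (1 + gamma * ((B - sum1 eta N) / INR w))) * (1 - p) ^ n) end.
  { intros n Hn. cbv beta. rewrite sum1_pad, Nat.min_r by lia. rewrite pow_add. ring. }
  rewrite (is_series_unique _ _ (series_tail (N - 1) _ _ (1 - p) ltac:(lra) Hs2)).
  rewrite (sum1_ext (fun j => p * (1 - p) ^ (j - 1 + w) * (1 / 2) * log2 (1 + gamma * padN N eta (S (j - 1))))
     (fun j => p * (1 - p) ^ (j - 1 + w) * (1 / 2) * log2 (1 + gamma * eta j))).
  2:{ intros i Hi. unfold padN. replace (S (i - 1)) with i by lia.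
      replace (i <=? N)%nat with true. reflexivity. symmetry; apply Nat.leb_le; lia. }
  rewrite (sum1_ext (fun j => p ^ 2 * (1 - p) ^ (j - 1 + w) * (INR w / 2) *
        log2 (1 + gamma * ((B - sum1 (padN N eta) (S (j - 1))) / INR w)))
     (fun j => p ^ 2 * (1 - p) ^ (j - 1 + w) * (INR w / 2)
      * log2 (1 + gamma * ((B - sum1 eta j) / INR w)))).
  2:{ intros i Hi. rewrite sum1_pad, Nat.min_l by lia. replace (S (i - 1)) with i by lia. reflexivity. }
  unfold Rdiv. rewrite !Rmult_0_l. lra.
Qed.

Definition ind (m i : nat) : R := if Nat.eqb i m then 1 else 0.
Definition pert (x : nat -> R) (c : R) (m : nat) : nat -> R := fun i => x i + c * ind m i.

Lemma sum1_pert x c m k : (1 <= m)%nat ->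
  sum1 (pert x c m) k = sum1 x k + (if (m <=? k)%nat then c else 0).
Proof.
  intros Hm. induction k.
  - simpl. destruct (Nat.leb_spec m 0); [lia|ring].
  - change (sum1 (pert x c m) (S k)) with (sum1 (pert x c m) k + pert x c m (S k)).
    rewrite IHk. simpl sum1. unfold pert, ind.
    destruct (Nat.eqb_spec (S k) m); destruct (Nat.leb_spec m k); destruct (Nat.leb_spec m (S k));
      try lia; ring.
Qed.

Lemma pert_at x c m : pert x c m m = x m + c.
Proof. unfold pert, ind. rewrite Nat.eqb_refl. ring. Qed.
Lemma pert_ne x c m i : i <> m -> pert x c m i = x i.
Proof. intros H. unfold pert, ind. destruct (Nat.eqb_spec i m); [lia|ring]. Qed.

Lemma sum1_pt f g j n : (forall i, (1 <= i <= n)%nat -> i <> j -> f i = g i) ->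
  (1 <= j <= n)%nat -> sum1 f n = sum1 g n + (f j - g j).
Proof.
  induction n; intros H Hj. lia.
  simpl. destruct (Nat.eq_dec j (S n)).
  - subst. rewrite (sum1_ext f g n). ring. intros i Hi; apply H; lia.
  - rewrite IHn. rewrite (H (S n)) by lia. ring. intros i Hi Hne; apply H; lia. lia.
Qed.

Lemma sum1_pt2 f g j n : (forall i, (1 <= i <= n)%nat -> i <> j -> i <> S j -> f i = g i) ->
  (1 <= j)%nat -> (S j <= n)%nat ->
  sum1 f n = sum1 g n + (f j - g j) + (f (S j) - g (S j)).
Proof.
  induction n; intros H Hj Hjn. lia.
  simpl. destruct (Nat.eq_dec n j).
  - subst. rewrite (sum1_pt f g j j). ring. intros i Hi Hne; apply H; lia. lia.
  - rewrite IHn. rewrite (H (S n)) by lia. ring. intros i Hi Hne Hne'; apply H; lia. lia. lia.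
Qed.

Lemma onesided_pos (f : R -> R) l d : derivable_pt_lim f 0 l -> 0 < d ->
  (forall t, 0 < t < d -> f t <= f 0) -> l <= 0.
Proof.
  intros Hd Hdp Hf. destruct (Rle_or_lt l 0) as [H|H]; auto. exfalso.
  destruct (Hd (l / 2) ltac:(lra)) as [del Hdel].
  set (h := Rmin (del / 2) (d / 2)).
  assert (Hh : 0 < h) by (unfold h; apply Rmin_pos; destruct del; simpl; lra).
  assert (Hh1 : h < del) by (unfold h; destruct del as [dl Hdl]; simpl in *; 
     apply Rle_lt_trans with (dl/2); [apply Rmin_l|lra]).
  assert (Hh2 : h < d) by (unfold h; apply Rle_lt_trans with (d/2); [apply Rmin_r|lra]).
  specialize (Hdel h ltac:(lra) ltac:(rewrite Rabs_right; lra)).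
  rewrite Rplus_0_l in Hdel.
  specialize (Hf h ltac:(lra)).
  apply Rabs_def2 in Hdel. destruct Hdel as [H1 H2].
  assert ((f h - f 0) / h <= 0).
  { unfold Rdiv. apply Rmult_le_0_r. lra. left. apply Rinv_0_lt_compat. lra. }
  lra.
Qed.

Lemma onesided_neg (f : R -> R) l d : derivable_pt_lim f 0 l -> 0 < d ->
  (forall t, - d < t < 0 -> f t <= f 0) -> 0 <= l.
Proof.
  intros Hd Hdp Hf.
  assert (Hd' : derivable_pt_lim (fun t => f (- t)) 0 (- l)).
  { apply is_derive_Reals. apply is_derive_Reals in Hd.
    assert (H := is_derive_comp f (fun t => - t) 0 l (-1)).
    specialize (H ltac:(simpl; rewrite Ropp_0; exact Hd)).
    assert (H' : is_derive (fun t : R => - t) 0 (-1)) by (auto_derive; auto; ring).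
    specialize (H H'). replace (- l) with (scal (-1) l). exact H.
    unfold scal; simpl; unfold mult; simpl. ring. }
  assert (- l <= 0).
  { apply (onesided_pos _ _ d Hd' Hdp). intros t Ht. rewrite Ropp_0. apply Hf. lra. }
  lra.
Qed.

Definition Aw p w j := p * (1 - p) ^ (j - 1 + w) * (1 / 2).
Definition Dw p w j := p ^ 2 * (1 - p) ^ (j - 1 + w) * (INR w / 2).
Definition Ew p w N := p ^ 2 * (1 - p) ^ w * (INR w / 2) * (1 - p) ^ (N - 1) / (1 - (1 - p)).

Definition psiN p gamma B w N xi t :=
  Aw p w N * log2 (1 + gamma * (xi N + t))
  + Ew p w N * log2 (1 + gamma * ((B - (sum1 xi N + t)) / INR w)).

Definition psiP p gamma B w (j : nat) xi t :=
  Aw p w j * log2 (1 + gamma * (xi j + t))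
  + Aw p w (S j) * log2 (1 + gamma * (xi (S j) + - t))
  + Dw p w j * log2 (1 + gamma * ((B - (sum1 xi j + t)) / INR w)).

Lemma Tc_slack p gamma B w N xi t : (1 <= N)%nat ->
  Tc p gamma B w N (pert xi t N) - Tc p gamma B w N xi
  = psiN p gamma B w N xi t - psiN p gamma B w N xi 0.
Proof.
  intros HN. unfold Tc, psiN, Aw, Ew.
  rewrite (sum1_pt (fun j => p * (1 - p) ^ (j - 1 + w) * (1 / 2) * log2 (1 + gamma * pert xi t N j))
     (fun j => p * (1 - p) ^ (j - 1 + w) * (1 / 2) * log2 (1 + gamma * xi j)) N N).
  2:{ intros i Hi Hne. rewrite pert_ne by auto. reflexivity. }
  2: lia.
  rewrite (sum1_ext (fun j => p ^ 2 * (1 - p) ^ (j - 1 + w) * (INR w / 2) *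
      log2 (1 + gamma * ((B - sum1 (pert xi t N) j) / INR w)))
    (fun j => p ^ 2 * (1 - p) ^ (j - 1 + w) * (INR w / 2) *
      log2 (1 + gamma * ((B - sum1 xi j) / INR w)))).
  2:{ intros i Hi. rewrite sum1_pert by lia. destruct (Nat.leb_spec N i). lia. rewrite Rplus_0_r. reflexivity. }
  rewrite sum1_pert by lia. rewrite Nat.leb_refl. rewrite pert_at. rewrite !Rplus_0_r.
  unfold Rdiv. ring.
Qed.

Lemma Tc_pair p gamma B w N xi t j : (1 <= j)%nat -> (S j <= N)%nat ->
  Tc p gamma B w N (pert (pert xi t j) (- t) (S j)) - Tc p gamma B w N xi
  = psiP p gamma B w j xi t - psiP p gamma B w j xi 0.
Proof.
  intros Hj HjN. unfold Tc, psiP, Aw, Dw.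
  rewrite (sum1_pt2 (fun i => p * (1 - p) ^ (i - 1 + w) * (1 / 2) * log2 (1 + gamma * pert (pert xi t j) (- t) (S j) i))
     (fun j => p * (1 - p) ^ (j - 1 + w) * (1 / 2) * log2 (1 + gamma * xi j)) j N).
  2:{ intros i Hi Hne Hne'. rewrite !pert_ne by auto. reflexivity. }
  2,3: lia.
  rewrite (sum1_pt (fun j0 => p ^ 2 * (1 - p) ^ (j0 - 1 + w) * (INR w / 2) *
      log2 (1 + gamma * ((B - sum1 (pert (pert xi t j) (- t) (S j)) j0) / INR w)))
    (fun j => p ^ 2 * (1 - p) ^ (j - 1 + w) * (INR w / 2) *
      log2 (1 + gamma * ((B - sum1 xi j) / INR w))) j (N - 1)).
  2:{ intros i Hi Hne. rewrite !sum1_pert by lia.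
      destruct (Nat.leb_spec j i); destruct (Nat.leb_spec (S j) i); try lia;
      match goal with |- context [sum1 xi i + ?a + ?b] => replace (sum1 xi i + a + b) with (sum1 xi i) by ring end; reflexivity. }
  2: lia.
  rewrite !sum1_pert by lia.
  rewrite Nat.leb_refl. destruct (Nat.leb_spec (S j) j); [lia|].
  destruct (Nat.leb_spec j N); [|lia]. destruct (Nat.leb_spec (S j) N); [|lia].
  rewrite pert_at. rewrite pert_ne by lia. rewrite pert_at. rewrite pert_ne by lia.
  replace (sum1 xi N + t + - t) with (sum1 xi N) by ring.
  rewrite !Rplus_0_r. replace (xi (S j) + - 0) with (xi (S j)) by ring.
  unfold Rdiv. ring.
Qed.

Lemma INR_w_pos w : (1 <= w)%nat -> 0 < INR w.
Proof. intros; apply lt_0_INR; lia. Qed.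

Lemma Ew_Aw p w N : 0 < p < 1 -> (1 <= N)%nat -> Ew p w N = INR w * Aw p w N.
Proof.
  intros Hp HN. unfold Ew, Aw. rewrite pow_add. field. lra.
Qed.

Lemma Aw_S p w j : (1 <= j)%nat -> Aw p w (S j) = (1 - p) * Aw p w j.
Proof.
  intros Hj. unfold Aw. replace (S j - 1 + w)%nat with (S (j - 1 + w)) by lia. simpl. ring.
Qed.

Lemma Dw_Aw p w j : Dw p w j = INR w * p * Aw p w j.
Proof. unfold Dw, Aw. field. Qed.

Lemma dpsiN p gamma B w N xi : 0 < p < 1 -> (1 <= N)%nat -> 0 < gamma -> (1 <= w)%nat ->
  0 <= xi N -> 0 <= B - sum1 xi N ->
  derivable_pt_lim (psiN p gamma B w N xi) 0
    (gamma / ln 2 * Aw p w N * (1 / (1 + gamma * xi N) - 1 / (1 + gamma / INR w * (B - sum1 xi N)))).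
Proof.
  intros Hp HN Hg Hw Hx HR. assert (Hw' := INR_w_pos w Hw).
  assert (Hl : 0 < ln 2) by (rewrite <- ln_1; apply ln_increasing; lra).
  assert (0 <= gamma * xi N) by (apply Rmult_le_pos; lra).
  assert (0 <= gamma * ((B - sum1 xi N) / INR w)) by (apply Rmult_le_pos; [lra|apply Rdiv_le_0_compat; lra]).
  assert (0 <= gamma * (B - sum1 xi N)) by (apply Rmult_le_pos; lra).
  apply is_derive_Reals. unfold psiN, log2.
  auto_derive.
  - repeat split; try lra; rewrite Rplus_0_r; lra.
  - rewrite Ew_Aw by auto. field. repeat split; try lra.
    all: try (apply Rgt_not_eq; rewrite ?Rplus_0_r; lra).
Qed.

Lemma dpsiP p gamma B w j xi : 0 < p < 1 -> (1 <= j)%nat -> 0 < gamma -> (1 <= w)%nat ->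
  0 <= xi j -> 0 <= xi (S j) -> 0 <= B - sum1 xi j ->
  derivable_pt_lim (psiP p gamma B w j xi) 0
    (gamma / ln 2 * Aw p w j * (1 / (1 + gamma * xi j) - (1 - p) / (1 + gamma * xi (S j))
       - p / (1 + gamma / INR w * (B - sum1 xi j)))).
Proof.
  intros Hp Hj Hg Hw Hx Hx' HR. assert (Hw' := INR_w_pos w Hw).
  assert (Hl : 0 < ln 2) by (rewrite <- ln_1; apply ln_increasing; lra).
  assert (0 <= gamma * xi j) by (apply Rmult_le_pos; lra).
  assert (0 <= gamma * xi (S j)) by (apply Rmult_le_pos; lra).
  assert (0 <= gamma * ((B - sum1 xi j) / INR w)) by (apply Rmult_le_pos; [lra|apply Rdiv_le_0_compat; lra]).
  assert (0 <= gamma * (B - sum1 xi j)) by (apply Rmult_le_pos; lra).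
  apply is_derive_Reals. unfold psiP, log2.
  auto_derive.
  - repeat split; try lra; rewrite ?Rplus_0_r, ?Ropp_0, ?Rplus_0_r; lra.
  - rewrite Aw_S, Dw_Aw by auto. field. repeat split; try lra.
    all: try (apply Rgt_not_eq; rewrite ?Ropp_0, ?Rplus_0_r; lra).
Qed.

Lemma sum1_mono x k n : (forall i, (1 <= i <= n)%nat -> 0 <= x i) -> (k <= n)%nat ->
  sum1 x k <= sum1 x n.
Proof.
  induction n; intros H Hk.
  - replace k with 0%nat by lia. lra.
  - destruct (Nat.eq_dec k (S n)). subst; lra.
    simpl. assert (sum1 x k <= sum1 x n) by (apply IHn; [intros i Hi; apply H; lia|lia]).
    assert (0 <= x (S n)) by (apply H; lia). lra.
Qed.

Lemma sign_l c x : 0 < c -> c * x <= 0 -> x <= 0.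
Proof. intros Hc H. destruct (Rle_or_lt x 0); auto.
  assert (0 < c * x) by (apply Rmult_lt_0_compat; lra). lra. Qed.
Lemma sign_r c x : 0 < c -> 0 <= c * x -> 0 <= x.
Proof. intros Hc H. destruct (Rle_or_lt 0 x); auto.
  assert (0 < c * - x) by (apply Rmult_lt_0_compat; lra). lra. Qed.

Lemma inv_lt1 y : 0 < y -> 1 / (1 + y) < 1.
Proof. intros Hy. apply (Rmult_lt_reg_r (1 + y)). lra. unfold Rdiv. rewrite Rmult_assoc, Rinv_l by lra. lra. Qed.

Lemma Aw_pos p w j : 0 < p < 1 -> 0 < Aw p w j.
Proof. intros Hp. unfold Aw. apply Rmult_lt_0_compat; [apply Rmult_lt_0_compat|lra]; [lra|apply pow_lt; lra]. Qed.

Lemma feas_slack B N xi t : (1 <= N)%nat -> feasibleN B N xi ->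
  - xi N <= t <= B - sum1 xi N -> feasibleN B N (pert xi t N).
Proof.
  intros HN [Hnn Hs] Ht. split.
  - intros i Hi. destruct (Nat.eq_dec i N). subst. rewrite pert_at. lra.
    rewrite pert_ne by auto. apply Hnn; auto.
  - rewrite sum1_pert by lia. rewrite Nat.leb_refl. lra.
Qed.

Lemma feas_pair B N xi t j : (1 <= j)%nat -> (S j <= N)%nat -> feasibleN B N xi ->
  - xi j <= t <= xi (S j) -> feasibleN B N (pert (pert xi t j) (- t) (S j)).
Proof.
  intros Hj HjN [Hnn Hs] Ht. split.
  - intros i Hi. destruct (Nat.eq_dec i (S j)). subst. rewrite pert_at, pert_ne by lia. lra.
    rewrite pert_ne by auto. destruct (Nat.eq_dec i j). subst. rewrite pert_at. lra.
    rewrite pert_ne by auto. apply Hnn; auto.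
  - rewrite !sum1_pert by lia.
    destruct (Nat.leb_spec j N); [|lia]. destruct (Nat.leb_spec (S j) N); [|lia]. lra.
Qed.

Theorem lemma6 (p gamma B : R) (w N : nat) (xi : nat -> R) :
  0 < p < 1 -> 0 < gamma -> 0 < B -> (1 <= w)%nat -> (1 <= N)%nat ->
  is_maximizerN p gamma B w N xi ->
  xi N = (B - sum1 xi N) / INR w /\
  (forall j : nat, (1 <= j <= N - 1)%nat ->
     (1 - p) / (1 + gamma * xi (S j))
     = 1 / (1 + gamma * xi j)
       - p / (1 + gamma / INR w * (B - sum1 xi j))).
Proof.
  intros Hp Hg HB Hw HN [Hfeas Hopt].
  assert (Hfeas' := Hfeas). destruct Hfeas' as [Hnn Hsum].
  assert (Hw' := INR_w_pos w Hw).
  assert (Hl : 0 < ln 2) by (rewrite <- ln_1; apply ln_increasing; lra).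
  assert (Hopt' : forall eta, feasibleN B N eta -> Tc p gamma B w N eta <= Tc p gamma B w N xi).
  { intros eta He. rewrite <- !TN_Tc by auto. apply Hopt; auto. }
  assert (Hmono : forall k, (k <= N)%nat -> sum1 xi k <= sum1 xi N)
    by (intros k Hk; apply sum1_mono; auto).
  assert (HxN : 0 <= xi N) by (apply Hnn; lia).
  set (q := fun k => 1 / (1 + gamma * xi k)).
  set (r := fun k => 1 / (1 + gamma / INR w * (B - sum1 xi k))).
  assert (Hcpos : forall j, 0 < gamma / ln 2 * Aw p w j).
  { intros j. apply Rmult_lt_0_compat. apply Rdiv_lt_0_compat; lra. apply Aw_pos; auto. }
  assert (NP : 0 < B - sum1 xi N -> q N <= r N).
  { intros HR.
    assert (Hd := dpsiN p gamma B w N xi Hp HN Hg Hw HxN ltac:(lra)).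
    assert (Hle := onesided_pos _ _ _ Hd HR).
    assert (X : forall t, 0 < t < B - sum1 xi N -> psiN p gamma B w N xi t <= psiN p gamma B w N xi 0).
    { intros t Ht. assert (E := Tc_slack p gamma B w N xi t HN).
      assert (F := Hopt' _ (feas_slack B N xi t HN Hfeas ltac:(lra))). lra. }
    specialize (Hle X). unfold q, r.
    assert (S := sign_l _ _ (Hcpos N) Hle). lra. }
  assert (NM : 0 < xi N -> r N <= q N).
  { intros Hx.
    assert (Hd := dpsiN p gamma B w N xi Hp HN Hg Hw HxN ltac:(lra)).
    assert (Hle := onesided_neg _ _ _ Hd Hx).
    assert (X : forall t, - xi N < t < 0 -> psiN p gamma B w N xi t <= psiN p gamma B w N xi 0).
    { intros t Ht. assert (E := Tc_slack p gamma B w N xi t HN).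
      assert (F := Hopt' _ (feas_slack B N xi t HN Hfeas ltac:(lra))). lra. }
    specialize (Hle X). unfold q, r.
    assert (S := sign_r _ _ (Hcpos N) Hle). lra. }
  assert (PP : forall j, (1 <= j)%nat -> (S j <= N)%nat -> 0 < xi (S j) ->
            q j - (1 - p) * q (S j) - p * r j <= 0).
  { intros j Hj HjN Hx.
    assert (Hxj : 0 <= xi j) by (apply Hnn; lia).
    assert (HRj : 0 <= B - sum1 xi j) by (assert (sum1 xi j <= sum1 xi N) by (apply Hmono; lia); lra).
    assert (Hd := dpsiP p gamma B w j xi Hp Hj Hg Hw Hxj ltac:(lra) HRj).
    assert (Hle := onesided_pos _ _ _ Hd Hx).
    assert (X : forall t, 0 < t < xi (S j) -> psiP p gamma B w j xi t <= psiP p gamma B w j xi 0).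
    { intros t Ht. assert (E := Tc_pair p gamma B w N xi t j Hj HjN).
      assert (F := Hopt' _ (feas_pair B N xi t j Hj HjN Hfeas ltac:(lra))). lra. }
    specialize (Hle X). unfold q, r.
    assert (S := sign_l _ _ (Hcpos j) Hle). unfold Rdiv in *. lra. }
  assert (PM : forall j, (1 <= j)%nat -> (S j <= N)%nat -> 0 < xi j ->
            0 <= q j - (1 - p) * q (S j) - p * r j).
  { intros j Hj HjN Hx.
    assert (Hxj : 0 <= xi (S j)) by (apply Hnn; lia).
    assert (HRj : 0 <= B - sum1 xi j) by (assert (sum1 xi j <= sum1 xi N) by (apply Hmono; lia); lra).
    assert (Hd := dpsiP p gamma B w j xi Hp Hj Hg Hw ltac:(lra) Hxj HRj).
    assert (Hle := onesided_neg _ _ _ Hd Hx).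
    assert (X : forall t, - xi j < t < 0 -> psiP p gamma B w j xi t <= psiP p gamma B w j xi 0).
    { intros t Ht. assert (E := Tc_pair p gamma B w N xi t j Hj HjN).
      assert (F := Hopt' _ (feas_pair B N xi t j Hj HjN Hfeas ltac:(lra))). lra. }
    specialize (Hle X). unfold q, r.
    assert (S := sign_r _ _ (Hcpos j) Hle). unfold Rdiv in *. lra. }
  assert (qlt : forall k, 0 < xi k -> q k < 1).
  { intros k Hk. unfold q. apply inv_lt1. apply Rmult_lt_0_compat; lra. }
  assert (qeq : forall k, xi k = 0 -> q k = 1).
  { intros k Hk. unfold q. rewrite Hk. field. }
  assert (rlt : forall k, 0 < B - sum1 xi k -> r k < 1).
  { intros k Hk. unfold r. apply inv_lt1. apply Rmult_lt_0_compat; [apply Rdiv_lt_0_compat|]; lra. }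
  assert (req : forall k, B - sum1 xi k = 0 -> r k = 1).
  { intros k Hk. unfold r. rewrite Hk, Rmult_0_r, Rplus_0_r. field. }
  assert (HR : 0 < B - sum1 xi N).
  { destruct (Rle_or_lt (B - sum1 xi N) 0) as [H0|H0]; auto. exfalso.
    assert (Hall : forall m, (m <= N)%nat -> sum1 xi (N - m) = B).
    { induction m; intros Hm.
      - rewrite Nat.sub_0_r. lra.
      - specialize (IHm ltac:(lia)). set (k := (N - m)%nat) in *.
        assert (Hk : k = S (N - S m)) by (unfold k; lia).
        assert (Hxk : xi k = 0).
        { destruct (Rle_or_lt (xi k) 0) as [H1|H1].
          - assert (0 <= xi k) by (apply Hnn; lia). lra.
          - exfalso. destruct (Nat.eq_dec k N) as [e|e].
            + rewrite e in H1, IHm. specialize (NM H1).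
              rewrite (req N) in NM by lra. specialize (qlt N H1). lra.
            + assert (HS : sum1 xi (S k) <= sum1 xi N) by (apply Hmono; lia).
              assert (0 <= xi (S k)) by (apply Hnn; lia).
              simpl in HS. assert (xi (S k) = 0) by lra.
              specialize (PM k ltac:(lia) ltac:(lia) H1).
              rewrite (qeq (S k)), (req k) in PM by lra. specialize (qlt k H1). lra. }
        rewrite Hk in IHm. simpl in IHm. rewrite <- Hk in IHm. lra. }
    specialize (Hall N (le_n N)). rewrite Nat.sub_diag in Hall. simpl in Hall. lra. }
  assert (Hpos : forall m, (m <= N - 1)%nat -> 0 < xi (N - m)%nat).
  { induction m; intros Hm.
    - rewrite Nat.sub_0_r. specialize (NP HR). specialize (rlt N HR).
      destruct (Rle_or_lt (xi N) 0) as [H1|H1]; auto.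
      rewrite (qeq N) in NP by lra. lra.
    - specialize (IHm ltac:(lia)). set (k := (N - S m)%nat).
      assert (Hk : (N - m)%nat = S k) by (unfold k; lia). rewrite Hk in IHm.
      specialize (PP k ltac:(lia) ltac:(lia) IHm).
      assert (HRk : 0 < B - sum1 xi k) by (assert (sum1 xi k <= sum1 xi N) by (apply Hmono; lia); lra).
      specialize (rlt k HRk). specialize (qlt (S k) IHm).
      assert (0 <= xi k) by (apply Hnn; lia).
      destruct (Rle_or_lt (xi k) 0) as [H1|H1]; auto.
      rewrite (qeq k) in PP by lra. assert ((1-p)*q (S k) < 1-p) by (rewrite <- (Rmult_1_r (1-p)) at 2; apply Rmult_lt_compat_l; lra). assert (p * r k < p) by (rewrite <- (Rmult_1_r p) at 2; apply Rmult_lt_compat_l; lra). lra. }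
  assert (Hposj : forall j, (1 <= j <= N)%nat -> 0 < xi j).
  { intros j Hj. replace j with (N - (N - j))%nat by lia. apply Hpos. lia. }
  split.
  - specialize (NP HR). specialize (NM (Hposj N ltac:(lia))).
    assert (Hq : q N = r N) by lra. unfold q, r in Hq.
    assert (0 <= gamma * xi N) by (apply Rmult_le_pos; lra).
    assert (0 < gamma / INR w * (B - sum1 xi N)) by (apply Rmult_lt_0_compat; [apply Rdiv_lt_0_compat|]; lra).
    assert (E : 1 + gamma * xi N = 1 + gamma / INR w * (B - sum1 xi N)).
    { apply (f_equal Rinv) in Hq. unfold Rdiv in Hq. rewrite !Rmult_1_l, !Rinv_inv in Hq. exact Hq. }
    apply (Rmult_eq_reg_l gamma). 2: lra. unfold Rdiv in *. lra.
  - intros j Hj.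
    specialize (PP j ltac:(lia) ltac:(lia) (Hposj (S j) ltac:(lia))).
    specialize (PM j ltac:(lia) ltac:(lia) (Hposj j ltac:(lia))).
    unfold q, r in PP, PM. unfold Rdiv in *. lra.
Qed.
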